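(* Let $G$ be a finitely generated, torsion-free, $2$-step nilpotent group whose maximal ring of scalars is $\mathbb{Z}$. Then $G$ cannot be decomposed as a direct product $G=H\times K$ of two non-abelian subgroups $H,K$.
   Context: Commutators: $[g,h]=g^{-1}h^{-1}gh$. Rings are associative with identity. Let $f:G/Z(G)\times G/Z(G)\to G'$, $f(gZ(G),hZ(G))=[g,h]$. A commutative ring $R$ is a ring of scalars of $G$ if there are faithful actions of $R$ by endomorphisms on $M=G/Z(G)$ and $N=G'$ with $f(rx,y)=f(x,ry)=rf(x,y)$ for all $r\in R$, $x,y\in M$. Identifying each ring of scalars with its image in $\mathrm{End}(M)$, the maximal ring of scalars is the one containing all others (as subrings). *)

(* Defs.v *)
(* MathComp (only for comPzRingType and int); groups are encoded
   directly as a carrier type with operations and group axioms, since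
   MathComp has no theory of possibly infinite groups. *)
From HB Require Import structures.
From mathcomp Require Import all_boot all_algebra.
From Stdlib Require Import List.

Set Implicit Arguments.
Unset Strict Implicit.
Unset Printing Implicit Defensive.

Import GRing.Theory.

Record group := Group {
  gcar :> Type;
  gmul : gcar -> gcar -> gcar;
  gone : gcar;
  ginv : gcar -> gcar;
  gmulA : forall x y z, gmul x (gmul y z) = gmul (gmul x y) z;
  gmul1 : forall x, gmul gone x = x;
  gmulV : forall x, gmul (ginv x) x = gone
}.

Section GroupDefs.
Variable G : group.

Local Notation "x * y" := (gmul x y).
Local Notation "1" := (gone G).

Definition gcomm (g h : G) : G := ginv g * (ginv h * (g * h)).

Fixpoint gpow (g : G) (n : nat) : G :=
  match n with O => 1 | S n => g * gpow g n end.

Definition gzpow (g : G) (z : int) : G :=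
  match z with Posz n => gpow g n | Negz n => ginv (gpow g n.+1) end.

Definition in_center (z : G) : Prop := forall g : G, z * g = g * z.

(* congruence modulo Z(G): elements of M = G/Z(G) are represented by
   elements of G, and x, y represent the same coset iff x^-1 y in Z(G) *)
Definition modZ (x y : G) : Prop := in_center (ginv x * y).

Inductive in_derived : G -> Prop :=
  | der_one : in_derived 1
  | der_comm : forall a b y, in_derived y -> in_derived (gcomm a b * y)
  | der_commV : forall a b y, in_derived y -> in_derived (ginv (gcomm a b) * y).

Inductive generated (s : list G) : G -> Prop :=
  | gen_one : generated s 1
  | gen_mul : forall x y, In x s -> generated s y -> generated s (x * y)
  | gen_mulV : forall x y, In x s -> generated s y -> generated s (ginv x * y).

Definition finitely_generated : Prop :=
  exists s : list G, forall g : G, generated s g.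

Definition torsion_free : Prop :=
  forall (g : G) (n : nat), (0 < n)%N -> gpow g n = 1 -> g = 1.

Definition two_step_nilpotent : Prop :=
  forall g h k : G, gcomm (gcomm g h) k = 1.

(* A commutative ring R is a ring of scalars of G: a faithful action of R by
   endomorphisms on M = G/Z(G) (actM, on representatives) and a faithful action
   by endomorphisms on N = G' (actN), such that
   f(rx,y) = f(x,ry) = r f(x,y) where f(xZ,yZ) = [x,y]. *)
Definition ring_of_scalars (R : comPzRingType)
    (actM : R -> G -> G) (actN : R -> G -> G) : Prop :=
  (* actM r is a well-defined endomorphism of M *)
  (forall r x y, modZ x y -> modZ (actM r x) (actM r y)) /\
  (forall r x y, modZ (actM r (x * y)) (actM r x * actM r y)) /\
  (forall x, modZ (actM 1%R x) x) /\
  (forall r s x, modZ (actM (r + s)%R x) (actM r x * actM s x)) /\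
  (forall r s x, modZ (actM (r * s)%R x) (actM r (actM s x))) /\
  (forall r s, (forall x, modZ (actM r x) (actM s x)) -> r = s) /\
  (forall r a, in_derived a -> in_derived (actN r a)) /\
  (forall r a b, in_derived a -> in_derived b ->
     actN r (a * b) = actN r a * actN r b) /\
  (forall a, in_derived a -> actN 1%R a = a) /\
  (forall r s a, in_derived a -> actN (r + s)%R a = actN r a * actN s a) /\
  (forall r s a, in_derived a -> actN (r * s)%R a = actN r (actN s a)) /\
  (forall r s, (forall a, in_derived a -> actN r a = actN s a) -> r = s) /\
  (forall r x y, gcomm (actM r x) y = actN r (gcomm x y)) /\
  (forall r x y, gcomm x (actM r y) = actN r (gcomm x y)).

(* The maximal ring of scalars of G is Z: the integers, acting by integer
   powers on M and N, form a ring of scalars, and the image in End(M) of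
   every ring of scalars is contained in the image of Z. *)
Definition max_ring_of_scalars_is_Z : Prop :=
  ring_of_scalars (fun z x => gzpow x z) (fun z x => gzpow x z) /\
  forall (R : comPzRingType) (actM actN : R -> G -> G),
    ring_of_scalars actM actN ->
    forall r : R, exists z : int, forall x : G, modZ (actM r x) (gzpow x z).

Definition subgroup (H : G -> Prop) : Prop :=
  H 1 /\ (forall x y, H x -> H y -> H (x * y)) /\ (forall x, H x -> H (ginv x)).

Definition nonabelian (H : G -> Prop) : Prop :=
  exists a b, H a /\ H b /\ a * b <> b * a.

Definition direct_product (H K : G -> Prop) : Prop :=
  subgroup H /\ subgroup K /\
  (forall h k, H h -> K k -> h * k = k * h) /\
  (forall x, H x -> K x -> x = 1) /\
  (forall g, exists h k, H h /\ K k /\ g = h * k).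

End GroupDefs.

(* Main.v *)
Require Import Defs.
From mathcomp Require Import all_boot all_algebra.
From Stdlib Require Import ClassicalEpsilon.
Set Implicit Arguments.
Unset Strict Implicit.

Local Notation "x *g y" := (gmul x y) (at level 40, left associativity).

Section Basics.
Variable G : group.
Implicit Types x y z : G.
Local Notation one := (gone G).

Lemma mulgVr x : x *g ginv x = one.
Proof.
rewrite -[LHS]gmul1 -{1}(gmulV (ginv x)) -gmulA (gmulA (ginv x) x) gmulV gmul1.
exact: gmulV.
Qed.

Lemma mulg1 x : x *g one = x.
Proof. by rewrite -(gmulV x) gmulA mulgVr gmul1. Qed.

Lemma mulKg x y : ginv x *g (x *g y) = y.
Proof. by rewrite gmulA gmulV gmul1. Qed.

Lemma mulKVg x y : x *g (ginv x *g y) = y.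
Proof. by rewrite gmulA mulgVr gmul1. Qed.

Lemma mulgK x y : x *g y *g ginv y = x.
Proof. by rewrite -gmulA mulgVr mulg1. Qed.

Lemma mulgKV x y : x *g ginv y *g y = x.
Proof. by rewrite -gmulA gmulV mulg1. Qed.

Lemma mulg_injl x y z : x *g y = x *g z -> y = z.
Proof. by move=> h; rewrite -(mulKg x y) h mulKg. Qed.

Lemma mulg_injr x y z : y *g x = z *g x -> y = z.
Proof. by move=> h; rewrite -(mulgK y x) h mulgK. Qed.

Lemma invgK x : ginv (ginv x) = x.
Proof. by apply: (mulg_injl (x:=ginv x)); rewrite mulgVr gmulV. Qed.

Lemma inv1 : ginv one = one.
Proof. by rewrite -[LHS]gmul1 mulgVr. Qed.

Lemma invMg x y : ginv (x *g y) = ginv y *g ginv x.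
Proof.
apply: (mulg_injl (x:=x *g y)); rewrite mulgVr -gmulA (gmulA y) mulgVr gmul1.
by rewrite mulgVr.
Qed.

Lemma inv_inj x y : ginv x = ginv y -> x = y.
Proof. by move=> h; rewrite -(invgK x) h invgK. Qed.

Lemma commE x y : gcomm x y = one -> x *g y = y *g x.
Proof.
rewrite /gcomm => h.
have h1 : ginv y *g (x *g y) = x by apply: (mulg_injl (x:=ginv x)); rewrite h gmulV.
by rewrite -{1}(mulKVg y (x *g y)) h1.
Qed.

Lemma commE' x y : x *g y = y *g x -> gcomm x y = one.
Proof. by rewrite /gcomm => ->; rewrite mulKg gmulV. Qed.

Lemma center1 : in_center one.
Proof. by move=> g; rewrite gmul1 mulg1. Qed.

Lemma centerM x y : in_center x -> in_center y -> in_center (x *g y).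
Proof. by move=> hx hy g; rewrite -gmulA hy gmulA hx gmulA. Qed.

Lemma centerV x : in_center x -> in_center (ginv x).
Proof.
move=> hx g; by apply: (mulg_injl (x:=x)); rewrite mulKVg gmulA hx mulgK.
Qed.

Lemma gpow1 n : gpow one n = one.
Proof. by elim: n => //= n ->; rewrite gmul1. Qed.

Lemma gzpow1 (m : int) : gzpow one m = one.
Proof. by case: m => n; rewrite /gzpow gpow1 ?inv1. Qed.

Lemma gzpow_one x : gzpow x 1 = x.
Proof. by rewrite /= mulg1. Qed.

Lemma gzpow_zero x : gzpow x 0 = one.
Proof. by []. Qed.

Lemma center_gzpow x (z : int) : in_center x -> in_center (gzpow x z).
Proof.
move=> hx; have hp : forall n, in_center (gpow x n).
  by elim=> [|n ih] /=; [exact: center1 | exact: centerM].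
by case: z => n; rewrite /gzpow; [exact: hp | apply: centerV; exact: hp].
Qed.

Lemma subgroup_gzpow (S : G -> Prop) x (z : int) : subgroup S -> S x -> S (gzpow x z).
Proof.
move=> [h1 [hM hV]] hx; have hp : forall n, S (gpow x n).
  by elim=> [|n ih] /=; [exact: h1 | exact: hM].
by case: z => n; rewrite /gzpow; [exact: hp | apply: hV; exact: hp].
Qed.

Lemma torsion_gzpow x (z : int) : torsion_free G -> gzpow x z = one -> z <> 0%R -> x = one.
Proof.
move=> tf; case: z => n /= h hn.
  apply: (tf x n) => //; case: n hn {h} => //.
apply: (tf x n.+1) => //.
by apply: inv_inj; rewrite h inv1.
Qed.

Lemma derived_center x : two_step_nilpotent G -> in_derived x -> in_center x.
Proof.
move=> nil; elim=> [|a b y _ ih|a b y _ ih].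
- exact: center1.
- apply: centerM => // g; apply: commE; exact: nil.
- apply: centerM => //; apply: centerV => g; apply: commE; exact: nil.
Qed.

Lemma derivedM x y : in_derived x -> in_derived y -> in_derived (x *g y).
Proof.
move=> hx hy; elim: hx => [|a b w _ ih|a b w _ ih].
- by rewrite gmul1.
- by rewrite -gmulA; apply: der_comm.
- by rewrite -gmulA; apply: der_commV.
Qed.

Lemma derived_comm x y : in_derived (gcomm x y).
Proof. by rewrite -[gcomm x y]mulg1; apply: der_comm; apply: der_one. Qed.

Lemma modZP x y : modZ x y <-> exists c, in_center c /\ y = x *g c.
Proof.
split=> [h|[c [hc ->]]]; last by rewrite /modZ mulKg.
by exists (ginv x *g y); split => //; rewrite mulKVg.
Qed.

Lemma modZ_eq x y : x = y -> modZ x y.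
Proof. by move=> ->; apply/modZP; exists one; split; [exact: center1| rewrite mulg1]. Qed.

Lemma modZ_trans x y (w : G) : modZ x y -> modZ y w -> modZ x w.
Proof.
move=> /modZP [c [hc ->]] /modZP [d [hd ->]]; apply/modZP.
by exists (c *g d); split; [exact: centerM | rewrite gmulA].
Qed.

Lemma modZ_sym x y : modZ x y -> modZ y x.
Proof.
move=> /modZP [c [hc ->]]; apply/modZP.
by exists (ginv c); split; [exact: centerV | rewrite mulgK].
Qed.

Lemma modZ_mul (a a' b b' : G) : modZ a a' -> modZ b b' -> modZ (a *g b) (a' *g b').
Proof.
move=> /modZP [c [hc ->]] /modZP [d [hd ->]]; apply/modZP.
exists (c *g d); split; first exact: centerM.
by rewrite -!gmulA; congr (a *g _); rewrite !gmulA hc.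
Qed.

Lemma gcomm_central x y (c : G) : in_center c -> gcomm (x *g c) y = gcomm x y.
Proof.
move=> hc; rewrite /gcomm invMg -(gmulA x c y) (hc y) (gmulA x y c).
rewrite (gmulA (ginv y) _ c) -gmulA (gmulA (ginv x) _ c) -(hc (ginv x *g _)).
by rewrite mulKg.
Qed.

Lemma swap_mid (a b c d : G) : b *g c = c *g b -> a *g b *g (c *g d) = a *g c *g (b *g d).
Proof. by move=> h; rewrite -!gmulA (gmulA b) h -gmulA. Qed.

End Basics.

Section DP.
Variable G : group.
Variables H K : G -> Prop.
Hypothesis hD : direct_product H K.
Local Notation one := (gone G).

Lemma sH : subgroup H. Proof. by case: hD. Qed.
Lemma sK : subgroup K. Proof. by case: hD => _ []. Qed.
Lemma hcom h k : H h -> K k -> h *g k = k *g h. Proof. by case: hD => _ [_ [h1 _]]; apply: h1. Qed.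
Lemma hI x : H x -> K x -> x = one. Proof. by case: hD => _ [_ [_ [h1 _]]]; apply: h1. Qed.

Lemma dec_ex g : exists p : G * G, H p.1 /\ K p.2 /\ g = p.1 *g p.2.
Proof. case: hD => _ [_ [_ [_ hd]]]; case: (hd g) => h [k [? [? ?]]]; by exists (h,k). Qed.

Definition pr g := proj1_sig (constructive_indefinite_description _ (dec_ex g)).
Definition p1 g := (pr g).1.
Definition p2 g := (pr g).2.

Lemma p_spec g : H (p1 g) /\ K (p2 g) /\ g = p1 g *g p2 g.
Proof. exact: (proj2_sig (constructive_indefinite_description _ (dec_ex g))). Qed.

Lemma H1 : H one. Proof. by case: sH. Qed.
Lemma K1 : K one. Proof. by case: sK. Qed.
Lemma HM x y : H x -> H y -> H (x *g y). Proof. by case: sH => _ [h _]; apply: h. Qed.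
Lemma KM x y : K x -> K y -> K (x *g y). Proof. by case: sK => _ [h _]; apply: h. Qed.
Lemma HV x : H x -> H (ginv x). Proof. by case: sH => _ [_ h]; apply: h. Qed.
Lemma KV x : K x -> K (ginv x). Proof. by case: sK => _ [_ h]; apply: h. Qed.

Lemma uniq_dec h k h' k' : H h -> K k -> H h' -> K k' -> h *g k = h' *g k' -> h = h' /\ k = k'.
Proof.
move=> Hh Kk Hh' Kk' e.
have e1 : ginv h' *g h = k' *g ginv k.
  by rewrite -(mulgK h k) e -gmulA mulKg.
have u1 : ginv h' *g h = one by apply: hI; [apply: HM => //; apply: HV | rewrite e1; apply: KM => //; apply: KV].
have eh : h = h' by rewrite -(mulKVg h' h) u1 mulg1.
split => //; subst h'; exact: (mulg_injl e).
Qed.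

Lemma p_eq h k : H h -> K k -> p1 (h *g k) = h /\ p2 (h *g k) = k.
Proof.
move=> Hh Kk; have [a [b c]] := p_spec (h *g k).
have [-> ->] := uniq_dec a b Hh Kk (esym c); by [].
Qed.

Lemma pM x y : p1 (x *g y) = p1 x *g p1 y /\ p2 (x *g y) = p2 x *g p2 y.
Proof.
have [a1 [b1 c1]] := p_spec x; have [a2 [b2 c2]] := p_spec y.
have e : x *g y = (p1 x *g p1 y) *g (p2 x *g p2 y).
  by rewrite {1}c1 {1}c2 swap_mid //; symmetry; apply: hcom.
by rewrite e; apply: p_eq; [apply: HM | apply: KM].
Qed.
Lemma p1M x y : p1 (x *g y) = p1 x *g p1 y. Proof. by case: (pM x y). Qed.
Lemma p2M x y : p2 (x *g y) = p2 x *g p2 y. Proof. by case: (pM x y). Qed.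

Lemma pV x : p1 (ginv x) = ginv (p1 x) /\ p2 (ginv x) = ginv (p2 x).
Proof.
have [a1 [b1 c1]] := p_spec x.
have e : ginv x = ginv (p1 x) *g ginv (p2 x).
  by rewrite {1}c1 invMg; symmetry; apply: hcom; [apply: HV | apply: KV].
by rewrite e; apply: p_eq; [apply: HV | apply: KV].
Qed.
Lemma p1V x : p1 (ginv x) = ginv (p1 x). Proof. by case: (pV x). Qed.
Lemma p2V x : p2 (ginv x) = ginv (p2 x). Proof. by case: (pV x). Qed.

Lemma p1C x y : p1 (gcomm x y) = gcomm (p1 x) (p1 y).
Proof. by rewrite /gcomm !p1M !p1V. Qed.
Lemma p2C x y : p2 (gcomm x y) = gcomm (p2 x) (p2 y).
Proof. by rewrite /gcomm !p2M !p2V. Qed.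

Lemma pH h : H h -> p1 h = h /\ p2 h = one.
Proof. by move=> Hh; rewrite -{1 3}(mulg1 h); apply: p_eq => //; apply: K1. Qed.
Lemma pK k : K k -> p1 k = one /\ p2 k = k.
Proof. by move=> Kk; rewrite -{1 2}(gmul1 k); apply: p_eq => //; apply: H1. Qed.

Lemma p_derived a : in_derived a -> in_derived (p1 a) /\ in_derived (p2 a).
Proof.
elim=> [|x y w _ [i1 i2]|x y w _ [i1 i2]].
- by rewrite (pH H1).1 (pH H1).2; split; apply: der_one.
- by rewrite p1M p2M p1C p2C; split; apply: der_comm.
- by rewrite p1M p2M p1V p2V p1C p2C; split; apply: der_commV.
Qed.

Lemma p_center z : in_center z -> in_center (p1 z) /\ in_center (p2 z).
Proof.
move=> hz; split=> g; have := hz g; have [a [b c]] := p_spec g => e.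
- have e1 : p1 z *g p1 g = p1 g *g p1 z by rewrite -!p1M e.
  rewrite c gmulA e1 -!gmulA; congr (_ *g _); apply: hcom => //; exact: (p_spec z).1.
- have e1 : p2 z *g p2 g = p2 g *g p2 z by rewrite -!p2M e.
  rewrite c -gmulA -e1 !gmulA; congr (_ *g _); symmetry; apply: hcom => //; exact: (p_spec z).2.1.
Qed.

Lemma gcomm_dec u v : gcomm u v = gcomm (p1 u) (p1 v) *g gcomm (p2 u) (p2 v).
Proof. by rewrite {1}(p_spec (gcomm u v)).2.2 p1C p2C. Qed.

Definition act (r : int * int) (g : G) : G := gzpow (p1 g) r.1 *g gzpow (p2 g) r.2.

Lemma p_act r g : p1 (act r g) = gzpow (p1 g) r.1 /\ p2 (act r g) = gzpow (p2 g) r.2.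
Proof.
apply: p_eq; apply: subgroup_gzpow; [exact: sH | exact: (p_spec g).1 | exact: sK | exact: (p_spec g).2.1].
Qed.

Lemma comm_pows (a b : int) x y : gzpow (p1 x) a *g gzpow (p2 y) b = gzpow (p2 y) b *g gzpow (p1 x) a.
Proof.
apply: hcom; apply: subgroup_gzpow; [exact: sH | exact: (p_spec x).1 | exact: sK | exact: (p_spec y).2.1].
Qed.

End DP.

Section Ring.
Variable G : group.
Variables H K : G -> Prop.
Hypothesis hD : direct_product H K.
Hypothesis tf : torsion_free G.
Hypothesis hZ : ring_of_scalars (fun (z : int) (x : G) => gzpow x z) (fun z x => gzpow x z).
Local Notation one := (gone G).
Local Notation p1 := (p1 hD).
Local Notation p2 := (p2 hD).
Local Notation act := (act hD).

Lemma Z2 (r : int) (x y : G) : modZ (gzpow (x *g y) r) (gzpow x r *g gzpow y r).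
Proof. by case: hZ => _ [h _]; apply: h. Qed.
Lemma Z4 (r s : int) (x : G) : modZ (gzpow x (r + s)%R) (gzpow x r *g gzpow x s).
Proof. by case: hZ => _ [_ [_ [h _]]]; apply: h. Qed.
Lemma Z5 (r s : int) (x : G) : modZ (gzpow x (r * s)%R) (gzpow (gzpow x s) r).
Proof. by case: hZ => _ [_ [_ [_ [h _]]]]; apply: h. Qed.
Lemma Z7 (r : int) (a : G) : in_derived a -> in_derived (gzpow a r).
Proof. by case: hZ => _ [_ [_ [_ [_ [_ [h _]]]]]]; apply: h. Qed.
Lemma Z8 (r : int) (a b : G) : in_derived a -> in_derived b -> gzpow (a *g b) r = gzpow a r *g gzpow b r.
Proof. by case: hZ => _ [_ [_ [_ [_ [_ [_ [h _]]]]]]]; apply: h. Qed.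
Lemma Z10 (r s : int) (a : G) : in_derived a -> gzpow a (r + s)%R = gzpow a r *g gzpow a s.
Proof. by case: hZ => _ [_ [_ [_ [_ [_ [_ [_ [_ [h _]]]]]]]]]; apply: h. Qed.
Lemma Z11 (r s : int) (a : G) : in_derived a -> gzpow a (r * s)%R = gzpow (gzpow a s) r.
Proof. by case: hZ => _ [_ [_ [_ [_ [_ [_ [_ [_ [_ [h _]]]]]]]]]]; apply: h. Qed.
Lemma Z13 (r : int) (x y : G) : gcomm (gzpow x r) y = gzpow (gcomm x y) r.
Proof. by case: hZ => _ [_ [_ [_ [_ [_ [_ [_ [_ [_ [_ [_ [h _]]]]]]]]]]]]; apply: h. Qed.
Lemma Z14 (r : int) (x y : G) : gcomm x (gzpow y r) = gzpow (gcomm x y) r.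
Proof. by case: hZ => _ [_ [_ [_ [_ [_ [_ [_ [_ [_ [_ [_ [_ h]]]]]]]]]]]]; apply: h. Qed.

Lemma keyL (y : G) (a c : int) : in_derived y -> y <> one -> gzpow y a = gzpow y c -> a = c.
Proof.
move=> dy ny e.
have e2 := Z10 (c - a)%R a dy; rewrite GRing.subrK -e -{1}(gmul1 (gzpow y a)) in e2.
have e3 := mulg_injr e2.
case: (eqVneq (c - a)%R 0%R) => [/eqP|hne].
  by rewrite GRing.subr_eq0 => /eqP.
by case: ny; apply: (torsion_gzpow tf (esym e3)); apply/eqP.
Qed.

Lemma c2 r x y : modZ (act r (x *g y)) (act r x *g act r y).
Proof.
case: r => a b; rewrite /act /= p1M p2M.
apply: modZ_trans (modZ_mul (Z2 a _ _) (Z2 b _ _)) _.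
by apply: modZ_eq; apply: swap_mid; apply: comm_pows.
Qed.

Lemma c1 r x y : modZ x y -> modZ (act r x) (act r y).
Proof.
move=> /modZP [c [hc ->]]; apply: modZ_sym; apply: modZ_trans (c2 r x c) _.
apply: modZ_sym; apply/modZP; exists (act r c); split => //.
have [h1 h2] := p_center hD hc.
by rewrite /act; apply: centerM; apply: center_gzpow.
Qed.

Lemma act1 x : act 1%R x = x.
Proof. by rewrite /act /= !mulg1 -(p_spec hD x).2.2. Qed.

Lemma c4 r s x : modZ (act (r + s)%R x) (act r x *g act s x).
Proof.
case: r => a b; case: s => c d; rewrite /act /=.
apply: modZ_trans (modZ_mul (Z4 a c _) (Z4 b d _)) _.
by apply: modZ_eq; apply: swap_mid; apply: comm_pows.
Qed.

Lemma c5 r s x : modZ (act (r * s)%R x) (act r (act s x)).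
Proof.
case: r => a b; case: s => c d; rewrite {2}/act (p_act hD _ _).1 (p_act hD _ _).2 /act /=.
exact: (modZ_mul (Z5 a c _) (Z5 b d _)).
Qed.

Lemma c7 r x : in_derived x -> in_derived (act r x).
Proof.
move=> dx; have [d1 d2] := p_derived hD dx.
by rewrite /act; apply: derivedM; apply: Z7.
Qed.

Lemma c8 r x y : in_derived x -> in_derived y -> act r (x *g y) = act r x *g act r y.
Proof.
case: r => a b dx dy; have [d1 d2] := p_derived hD dx; have [e1 e2] := p_derived hD dy.
rewrite /act /= p1M p2M Z8 // Z8 //.
by apply: swap_mid; apply: comm_pows.
Qed.

Lemma c10 r s x : in_derived x -> act (r + s)%R x = act r x *g act s x.
Proof.
case: r => a b; case: s => c d dx; have [d1 d2] := p_derived hD dx.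
rewrite /act /= Z10 // Z10 //.
by apply: swap_mid; apply: comm_pows.
Qed.

Lemma c11 r s x : in_derived x -> act (r * s)%R x = act r (act s x).
Proof.
case: r => a b; case: s => c d dx; have [d1 d2] := p_derived hD dx.
by rewrite {2}/act (p_act hD _ _).1 (p_act hD _ _).2 /act /= Z11 // Z11.
Qed.

Lemma c13 r x y : gcomm (act r x) y = act r (gcomm x y).
Proof.
case: r => a b; rewrite (gcomm_dec hD) (p_act hD _ _).1 (p_act hD _ _).2 /act p1C p2C /=.
by rewrite !Z13.
Qed.

Lemma c14 r x y : gcomm x (act r y) = act r (gcomm x y).
Proof.
case: r => a b; rewrite (gcomm_dec hD) (p_act hD _ _).1 (p_act hD _ _).2 /act p1C p2C /=.
by rewrite !Z14.
Qed.

Lemma actH h r : H h -> act r h = gzpow h r.1.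
Proof. by move=> Hh; rewrite /act (pH hD Hh).1 (pH hD Hh).2 gzpow1 mulg1. Qed.
Lemma actK k r : K k -> act r k = gzpow k r.2.
Proof. by move=> Kk; rewrite /act (pK hD Kk).1 (pK hD Kk).2 gzpow1 gmul1. Qed.

Lemma faithM_H (h h' : G) (a c : int) : h *g h' <> h' *g h ->
  modZ (gzpow h a) (gzpow h c) -> a = c.
Proof.
move=> nc /modZP [z [hz e]].
have e2 : gcomm (gzpow h c) h' = gcomm (gzpow h a) h' by rewrite e gcomm_central.
rewrite !Z13 in e2; apply: esym; apply: (keyL (derived_comm _ _)) e2.
by move/commE.
Qed.

End Ring.

Lemma Hcomm (G : group) (S : G -> Prop) x y : subgroup S -> S x -> S y -> S (gcomm x y).
Proof.
move=> hS sx sy; case: hS => h1 [hM hV]; rewrite /gcomm.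
apply: (hM); first exact: hV.
apply: (hM); first exact: hV.
exact: hM.
Qed.

Lemma act_ring (G : group) (H K : G -> Prop) (hD : direct_product H K) :
  torsion_free G ->
  ring_of_scalars (fun (z : int) (x : G) => gzpow x z) (fun z x => gzpow x z) ->
  nonabelian H -> nonabelian K ->
  ring_of_scalars (act hD) (act hD).
Proof.
move=> tf hZ [h [h' [Hh [Hh' nh]]]] [k [k' [Kk [Kk' nk]]]].
have yH : gcomm h h' <> gone G by move/commE.
have yK : gcomm k k' <> gone G by move/commE.
split; first exact: c1.
split; first exact: c2.
split; first by move=> x; apply: modZ_eq; apply: act1.
split; first exact: c4.
split; first exact: c5.
split.
  move=> [a b] [c d] e.
  have e1 := e h; rewrite !(actH hD _ Hh) /= in e1.
  have e2 := e k; rewrite !(actK hD _ Kk) /= in e2.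
  by rewrite (faithM_H tf hZ nh e1) (faithM_H tf hZ nk e2).
split; first exact: c7.
split; first exact: c8.
split; first by move=> x _; apply: act1.
split; first exact: c10.
split; first exact: c11.
split.
  move=> [a b] [c d] e.
  have hy : H (gcomm h h') by apply: Hcomm => //; exact: sH hD.
  have ky : K (gcomm k k') by apply: Hcomm => //; exact: sK hD.
  have e1 := e _ (derived_comm h h'); rewrite !(actH hD _ hy) /= in e1.
  have e2 := e _ (derived_comm k k'); rewrite !(actK hD _ ky) /= in e2.
  by rewrite (keyL tf hZ (derived_comm _ _) yH e1) (keyL tf hZ (derived_comm _ _) yK e2).
split; first exact: c13.
exact: c14.
Qed.

Theorem proposition3p4 (G : group) :
  finitely_generated G -> torsion_free G -> two_step_nilpotent G ->
  max_ring_of_scalars_is_Z G ->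
  ~ (exists H K : G -> Prop,
       direct_product H K /\ nonabelian H /\ nonabelian K).
Proof.
move=> _ tf _ [hZ hmax] [H [K [hD [nH nK]]]].
have rs := act_ring hD tf hZ nH nK.
have [z hz] := hmax _ _ _ rs (1%R, 0%R).
case: nH => [h [h' [Hh [Hh' nh]]]]; case: nK => [k [k' [Kk [Kk' nk]]]].
have e2 := hz k; rewrite (actK hD _ Kk) /= in e2.
have z0 := faithM_H tf hZ (a:=0%R) nk e2.
have e1 := hz h; rewrite (actH hD _ Hh) -z0 in e1.
by have := faithM_H tf hZ (a:=1%R) (c:=0%R) nh e1.
Qed.
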